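(* Let $p,q$ be distinct primes, $m>1$ an integer, and $S=\{p^kq^l: 0\le k,l\le m-1\}$ (so $|S|=m^2$). Then $i_-([S])=2m-2$ and $i_+([S])=(m-1)^2+1$; in particular $i_+([S])/|S|\to 1$ as $m\to\infty$.
   Context: The LCM matrix $[S]$ of $S=\{x_1,\dots,x_n\}$ has $(i,j)$ entry $\mathrm{lcm}(x_i,x_j)$; $i_+(M)$ and $i_-(M)$ denote the numbers of positive and negative eigenvalues (with multiplicity) of a real symmetric matrix $M$. *)

(* Defs.v *)
From HB Require Import structures.
From mathcomp Require Import all_boot all_order all_algebra all_field.
Set Implicit Arguments. Unset Strict Implicit. Unset Printing Implicit Defensive.
Import Order.TTheory GRing.Theory Num.Theory.
Local Open Scope ring_scope.

(* Eigenvalues (with multiplicity) of a square matrix over the algebraic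
   complex numbers algC: the roots of its (monic) characteristic polynomial,
   listed with multiplicity.  The multiset is unique up to permutation. *)
Definition eigvals (n : nat) (M : 'M[algC]_n) : seq algC :=
  sval (closed_field_poly_normal (char_poly M)).

(* i_+(M), i_-(M): numbers of positive / negative eigenvalues with
   multiplicity.  In algC, 0 < z means z is a positive real number. *)
Definition i_plus (n : nat) (M : 'M[algC]_n) : nat :=
  count (fun z : algC => 0 < z) (eigvals M).
Definition i_minus (n : nat) (M : 'M[algC]_n) : nat :=
  count (fun z : algC => z < 0) (eigvals M).

Definition lcm_mx (x : seq nat) : 'M[algC]_(size x) :=
  \matrix_(i < size x, j < size x) (lcmn (nth 0%N x i) (nth 0%N x j))%:R.

Definition Spq (p q m : nat) : seq nat :=
  [seq (p ^ k * q ^ l)%N | k <- iota 0 m, l <- iota 0 m].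

(* Main.v *)
Require Import Defs.
From HB Require Import structures.
From mathcomp Require Import all_boot all_order all_algebra all_field.
From mathcomp Require Import all_boot all_order all_algebra all_field.
From mathcomp Require Import ring.
Set Implicit Arguments. Unset Strict Implicit. Unset Printing Implicit Defensive.
Import Order.TTheory GRing.Theory Num.Theory Num.Def.
Local Open Scope ring_scope.

Definition ct n1 n2 (M : 'M[algC]_(n1, n2)) : 'M[algC]_(n2, n1) := map_mx conjC (trmx M).

Lemma ctK n1 n2 (M : 'M[algC]_(n1, n2)) : ct (ct M) = M.
Proof. by apply/matrixP => i j; rewrite !mxE conjCK. Qed.

Lemma ct_mul n1 n2 n3 (A : 'M[algC]_(n1, n2)) (B : 'M[algC]_(n2, n3)) :
  ct (A *m B) = ct B *m ct A.
Proof. by rewrite /ct trmx_mul map_mxM. Qed.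

Definition qf n (u e : 'rV[algC]_n) := \sum_i e 0 i * (u 0 i * (u 0 i)^*).

Lemma qf_mx n (u e : 'rV[algC]_n) : qf u e = (u *m diag_mx e *m ct u) 0 0.
Proof.
rewrite mul_mx_diag !mxE; apply: eq_bigr => i _; rewrite !mxE; ring.
Qed.

Lemma qfE n (V : 'M[algC]_n) e (x : 'rV_n) :
  (x *m (ct V *m diag_mx e *m V) *m ct x) 0 0 = qf (x *m ct V) e.
Proof.
by rewrite qf_mx ct_mul ctK !mulmxA.
Qed.

Lemma qf_neg n (c e : 'rV[algC]_n) : c != 0 -> (forall i, e 0 i < 0) -> qf c e < 0.
Proof.
move=> cn0 eneg.
have [j cj] : exists j, c 0 j != 0.
  apply/existsP; apply: contraR cn0; rewrite negb_exists => /forallP H.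
  by apply/eqP/rowP => j; rewrite mxE; move: (H j); rewrite negbK => /eqP.
rewrite /qf (bigD1 j) //=.
have H1 : e 0 j * (c 0 j * (c 0 j)^*) < 0.
  by rewrite -normCK nmulr_rlt0 // exprn_gt0 // normr_gt0.
have H2 : \sum_(i < n | i != j) e 0 i * (c 0 i * (c 0 i)^*) <= 0.
  apply: sumr_le0 => i _; rewrite -normCK nmulr_rle0 // exprn_ge0 // normr_ge0.
by have := ltr_leD H1 H2; rewrite addr0.
Qed.

Lemma qf_ge0 n (u e : 'rV[algC]_n) : (forall i, e 0 i \is Num.real) ->
  (forall i, e 0 i < 0 -> u 0 i = 0) -> 0 <= qf u e.
Proof.
move=> er ez; apply: sumr_ge0 => i _.
have [/ez ->|] := boolP (e 0 i < 0); first by rewrite mul0r mulr0.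
rewrite -real_leNgt ?real0 // => ge; rewrite -normCK mulr_ge0 // exprn_ge0 // normr_ge0 //.
Qed.

Lemma sylv n (A V1 V2 : 'M[algC]_n) (e1 e2 : 'rV[algC]_n) :
  V1 \in unitmx -> (forall i, e2 0 i \is Num.real) ->
  A = ct V1 *m diag_mx e1 *m V1 -> A = ct V2 *m diag_mx e2 *m V2 ->
  (#|[set i | (e1 0 i < 0)%R]| <= #|[set i | (e2 0 i < 0)%R]|)%N.
Proof.
move=> V1u e2r A1 A2.
set N1 := [set i | (e1 0 i < 0)%R]; set N2 := [set i | (e2 0 i < 0)%R].
pose E : 'M[algC]_(#|N1|, n) := \matrix_(j, i) (i == enum_val j)%:R.
pose S : 'M[algC]_(n, #|N2|) := \matrix_(i, j) (i == enum_val j)%:R.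
have ctV1u : ct V1 \in unitmx by rewrite /ct map_unitmx unitmx_tr.
pose X := E *m invmx (ct V1).
pose K := X *m ct V2 *m S.
rewrite leqNgt; apply/negP => lt21.
have : kermx K != 0.
  rewrite -mxrank_eq0 mxrank_ker subn_eq0 -ltnNge.
  by apply: leq_ltn_trans lt21; apply: rank_leq_col.
move=> kn0.
have [i ri] : exists i, row i (kermx K) != 0.
  apply/existsP; apply: contraR kn0; rewrite negb_exists => /forallP H.
  by apply/eqP/row_matrixP => i; rewrite row0; move: (H i); rewrite negbK => /eqP.
set c := row i (kermx K).
have cK : c *m K = 0 by rewrite /c -row_mul mulmx_ker row0.
pose x := c *m X.
have f1 : (x *m A *m ct x) 0 0 < 0.
  rewrite {1}A1 qfE /x /X !mulmxA mulmxKV // qf_mx -!mulmxA ct_mul.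
  have HH : E *m diag_mx e1 *m ct E = diag_mx (\row_j e1 0 (enum_val j)).
    rewrite mul_mx_diag; apply/matrixP => j j'; rewrite !mxE (bigD1 (enum_val j)) //= big1.
      rewrite !mxE eqxx (inj_eq enum_val_inj) conjC_nat mul1r addr0.
      by case: (j == j'); rewrite ?mulr1 ?mulr0.
    by move=> k kn; rewrite !mxE (negbTE kn) !mul0r.
  have -> : c *m (E *m (diag_mx e1 *m (ct E *m ct c))) = c *m (E *m diag_mx e1 *m ct E) *m ct c by rewrite !mulmxA.
  rewrite HH -qf_mx; apply: qf_neg => // j.
  rewrite mxE; have := enum_valP j; by rewrite inE.
have f2 : 0 <= (x *m A *m ct x) 0 0.
  rewrite {1}A2 qfE; apply: qf_ge0 => // k k2.
  have k2' : k \in N2 by rewrite inE.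
  have := congr1 (fun M : 'rV[algC]_#|N2| => M 0 (enum_rank_in k2' k)) cK.
  rewrite /K !mulmxA mxE (bigD1 k) //= big1 ?addr0.
    by rewrite !mxE enum_rankK_in // eqxx mulr1 /x /X !mulmxA.
  by move=> k' k'k; rewrite [S _ _]mxE enum_rankK_in // (negbTE k'k) mulr0.
by have := lt_le_trans f1 f2; rewrite ltxx.
Qed.
Lemma cnt n (f : 'I_n -> bool) : #|[set i | f i]| = count f (enum 'I_n).
Proof. rewrite cardsE cardE /enum_mem size_filter /enum_mem.
rewrite (eq_filter (a2 := predT)) // filter_predT; exact: eq_count. Qed.

Lemma char_poly_sim n (P D : 'M[algC]_n) : P \in unitmx ->
  char_poly (invmx P *m D *m P) = char_poly D.
Proof.
move=> Pu; rewrite /char_poly.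
set P' := map_mx polyC P; set Pi := map_mx polyC (invmx P).
have PiP : Pi *m P' = 1%:M by rewrite -map_mxM mulVmx // map_mx1.
have -> : char_poly_mx (invmx P *m D *m P) = Pi *m char_poly_mx D *m P'.
  rewrite /char_poly_mx !map_mxM mulmxBr mulmxBl -/P' -/Pi.
  by rewrite scalar_mxC -(mulmxA _ Pi) PiP mulmx1.
have PPi : P' *m Pi = 1%:M by rewrite -map_mxM mulmxV // map_mx1.
by rewrite !det_mulmx mulrC mulrA -det_mulmx PPi det1 mul1r.
Qed.

Lemma eigvals_sim n (A P : 'M[algC]_n) (d : 'rV[algC]_n) : P \in unitmx ->
  A = invmx P *m diag_mx d *m P ->
  perm_eq (eigvals A) [seq d 0 i | i <- enum 'I_n].
Proof.
move=> Pu AE; apply: prod_XsubC_eq.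
have := svalP (closed_field_poly_normal (char_poly A)).
rewrite -/(eigvals A) (monicP (char_poly_monic A)) scale1r => <-.
rewrite AE char_poly_sim // char_poly_trig ?diag_mx_is_trig //.
rewrite big_map big_enum /=; apply: eq_bigr => i _; by rewrite mxE eqxx mulr1n.
Qed.

Lemma diag_mxN n (e : 'rV[algC]_n) : diag_mx (- e) = - diag_mx e.
Proof. by apply/matrixP=> i j; rewrite !mxE mulNrn. Qed.

Lemma inertia n (A V : 'M[algC]_n) (e : 'rV[algC]_n) :
  A \is hermsymmx -> V \in unitmx -> (forall i, e 0 i \is Num.real) ->
  A = ct V *m diag_mx e *m V ->
  i_minus A = count (fun i => (e 0 i < 0)%R) (enum 'I_n) /\
  i_plus A = count (fun i => (0 < e 0 i)%R) (enum 'I_n).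
Proof.
move=> Ah Vu er AV.
set P := spectralmx A; set d := spectral_diag A.
have AE : A = invmx P *m diag_mx d *m P := orthomx_spectralP (hermitian_normalmx Ah).
have Pu : P \in unitmx := unitarymx_unit (spectral_unitarymx A).
have AP : A = ct P *m diag_mx d *m P.
  by rewrite AE invmx_unitary ?spectral_unitarymx.
have dr : forall i, d 0 i \is Num.real.
  by move=> i; have /mxOverP := hermitian_spectral_diag_real Ah; apply.
have pe := eigvals_sim Pu AE.
have cntd : forall f, count f (eigvals A) = count (fun i => f (d 0 i)) (enum 'I_n).
  by move=> f; rewrite (permP pe) count_map.
have nr : forall i, (- e) 0 i \is Num.real by move=> i; rewrite mxE realN.
have ndr : forall i, (- d) 0 i \is Num.real by move=> i; rewrite mxE realN.
have AVn : - A = ct V *m diag_mx (- e) *m V by rewrite AV diag_mxN mulmxN mulNmx.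
have APn : - A = ct P *m diag_mx (- d) *m P by rewrite AP diag_mxN mulmxN mulNmx.
have h1 := sylv Vu dr AV AP. have h2 := sylv Pu er AP AV.
have h3 := sylv Vu ndr AVn APn. have h4 := sylv Pu nr APn AVn.
rewrite !cnt in h1 h2 h3 h4.
split.
  rewrite /i_minus cntd; apply/eqP; rewrite eqn_leq h1 h2 //.
rewrite /i_plus cntd.
have E1 : forall (f : 'rV[algC]_n), count (fun i => (- f) 0 i < 0) (enum 'I_n) = count (fun i => 0 < f 0 i) (enum 'I_n).
  by move=> f; apply: eq_count => i; rewrite mxE oppr_lt0.
rewrite !E1 in h3 h4.
by apply/eqP; rewrite eqn_leq h3 h4.
Qed.

Lemma nth_allp (f : nat -> nat -> nat) (s t : seq nat) i :
  (i < size s * size t)%N ->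
  nth 0%N [seq f x y | x <- s, y <- t] i =
  f (nth 0%N s (i %/ size t)) (nth 0%N t (i %% size t)).
Proof.
elim: s i => [|x s IH] i //.
rewrite allpairs_cons nth_cat size_map mulSn => lti.
have st0 : (0 < size t)%N by case: (size t) lti => //; rewrite muln0.
case: ltnP => [it|ti].
  by rewrite (nth_map 0%N) // divn_small // modn_small.
rewrite IH; last by rewrite -(ltn_add2l (size t)) subnKC.
have -> : i = (1 * size t + (i - size t))%N by rewrite mul1n subnKC.
by rewrite divnMDl // modnMDl mul1n addKn add1n.
Qed.

Lemma size_Spq p q m : size (Spq p q m) = (m * m)%N.
Proof. by rewrite /Spq size_allpairs size_iota. Qed.

Lemma nth_Spq p q m i : (i < m * m)%N ->
  nth 0%N (Spq p q m) i = (p ^ (i %/ m) * q ^ (i %% m))%N.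
Proof.
move=> lti; have m0 : (0 < m)%N by case: m lti => //.
rewrite /Spq nth_allp ?size_iota // !nth_iota //.
  by rewrite ltn_pmod.
by rewrite ltn_divLR.
Qed.

Lemma logp_pq p q a b : prime p -> prime q -> p != q ->
  logn p (p ^ a * q ^ b) = a.
Proof.
move=> pp pq npq.
have p0 : (0 < p)%N by apply: prime_gt0.
have q0 : (0 < q)%N by apply: prime_gt0.
rewrite lognM ?expn_gt0 ?p0 ?q0 // pfactorK // logn_coprime ?addn0 //.
by apply: coprimeXr; rewrite prime_coprime // dvdn_prime2.
Qed.

Lemma uniq_Spq p q m : prime p -> prime q -> p != q -> uniq (Spq p q m).
Proof.
move=> pp pq npq; apply: allpairs_uniq; try exact: iota_uniq.
move=> [a b] [c d] _ _ /= E.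
have qp : q != p by rewrite eq_sym.
have Ea := logp_pq a b pp pq npq.
have Ec := logp_pq c d pp pq npq.
have Eb := logp_pq b a pq pp qp.
have Ed := logp_pq d c pq pp qp.
rewrite mulnC in Eb; rewrite mulnC in Ed.
by congr (_, _); [rewrite -Ea -Ec E | rewrite -Eb -Ed E].
Qed.

Lemma dvd_max p a c : (p ^ a %| p ^ maxn a c)%N.
Proof. by rewrite dvdn_exp2l // leq_maxl. Qed.

Lemma lcm_pq p q a b c d : prime p -> prime q -> p != q ->
  lcmn (p ^ a * q ^ b) (p ^ c * q ^ d) = (p ^ maxn a c * q ^ maxn b d)%N.
Proof.
move=> pp pq npq.
have cop : forall x y, coprime (p ^ x) (q ^ y).
  by move=> x y; apply: coprimeXl; apply: coprimeXr; rewrite prime_coprime // dvdn_prime2.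
have dm : forall r x y, (r ^ x %| r ^ maxn x y)%N by move=> r x y; rewrite dvdn_exp2l // leq_maxl.
have dm' : forall r x y, (r ^ y %| r ^ maxn x y)%N by move=> r x y; rewrite maxnC dm.
apply/eqP; rewrite eqn_dvd; apply/andP; split.
  by rewrite dvdn_lcm; apply/andP; split; apply: dvdn_mul.
rewrite Gauss_dvd //; apply/andP; split.
  have [le|lt] := leqP a c.
    by rewrite (dvdn_trans _ (dvdn_lcmr _ _)) ?dvdn_mulr.
  by rewrite (dvdn_trans _ (dvdn_lcml _ _)) ?dvdn_mulr.
have [le|lt] := leqP b d.
  by rewrite (dvdn_trans _ (dvdn_lcmr _ _)) ?dvdn_mull.
by rewrite (dvdn_trans _ (dvdn_lcml _ _)) ?dvdn_mull.
Qed.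
Lemma sum_divmod (R : Type) (idx : R) (op : Monoid.com_law idx) m N (F : nat -> nat -> R) :
  (0 < m)%N -> N = (m * m)%N ->
  \big[op/idx]_(r < N) F (r %/ m)%N (r %% m)%N =
  \big[op/idx]_(a < m) \big[op/idx]_(b < m) F a b.
Proof.
move=> m0 ->; rewrite -(big_mkord xpredT (fun r => F (r %/ m)%N (r %% m)%N)).
have H : forall k, \big[op/idx]_(0 <= r < k * m) F (r %/ m)%N (r %% m)%N =
  \big[op/idx]_(a < k) \big[op/idx]_(b < m) F a b; last exact: H.
elim => [|k IH]; first by rewrite mul0n big_ord0 big_geq.
rewrite mulSn addnC (@big_cat_nat _ _ _ (k * m)) ?leq_addr // IH big_ord_recr /=.
congr (op _ _).
rewrite -{1}(add0n (k * m)%N) big_addn addKn big_mkord; apply: eq_bigr => i _.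
by rewrite addnC divnMDl // modnMDl divn_small // modn_small // addn0.
Qed.

Definition hp (m p t : nat) : algC := (t < m)%N%:R * (p%:R) ^+ t.
Definition gp m p t := hp m p t - hp m p t.+1.

Lemma onedim m p w : (w < m)%N ->
  \sum_(t < m) ((w <= t)%N)%:R * gp m p t = p%:R ^+ w.
Proof.
move=> wm.
rewrite -(big_mkord xpredT (fun t => ((w <= t)%N)%:R * gp m p t)).
rewrite (@big_cat_nat _ _ _ w) ?(ltnW wm) //=.
rewrite big_nat_cond big1 ?add0r; last first.
  by move=> t /andP[/andP[_ tw] _]; rewrite leqNgt tw mul0r.
rewrite (@eq_big_nat _ _ _ _ _ _ (fun t => - (hp m p t.+1 - hp m p t))); last first.
  by move=> t /andP[wt _]; rewrite wt mul1r /gp opprB.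
rewrite sumrN telescope_sumr ?(ltnW wm) // /hp ltnn wm mul0r mul1r sub0r opprK //.
Qed.

Definition Wm p q m : 'M[algC]_(size (Spq p q m)) :=
  \matrix_(r, i) (((i %/ m <= r %/ m) && (i %% m <= r %% m))%N)%:R.
Definition gv p q m : 'rV[algC]_(size (Spq p q m)) :=
  \row_r (gp m p (r %/ m)%N * gp m q (r %% m)%N).

Lemma natb_mul (a b : bool) : ((a && b)%N)%:R = a%:R * b%:R :> algC.
Proof. by case: a; case: b; rewrite ?mul1r ?mul0r. Qed.

Lemma lcm_decomp p q m : prime p -> prime q -> p != q -> (0 < m)%N ->
  lcm_mx (Spq p q m) = ct (Wm p q m) *m diag_mx (gv p q m) *m Wm p q m.
Proof.
move=> pp pq npq m0; apply/matrixP => i j.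
have lt : forall k : 'I_(size (Spq p q m)), (k < m * m)%N.
  by move=> k; rewrite -(size_Spq p q m).
rewrite mul_mx_diag !mxE !nth_Spq ?lt // lcm_pq // natrM !natrX.
pose F a b := (((i %/ m <= a) && (j %/ m <= a))%N%:R * gp m p a) *
               (((i %% m <= b) && (j %% m <= b))%N%:R * gp m q b).
rewrite (eq_bigr (fun r : 'I_(size (Spq p q m)) => F (r %/ m)%N (r %% m)%N)); last first.
  move=> r _; rewrite !mxE conjC_nat /F !natb_mul; ring.
rewrite (@sum_divmod _ 0 +%R m _ F m0 (size_Spq p q m)).
rewrite /F -big_distrlr /=.
have dm : forall k : 'I_(size (Spq p q m)), (k %/ m < m)%N by move=> k; rewrite ltn_divLR.
have mm : forall k : 'I_(size (Spq p q m)), (k %% m < m)%N by move=> k; rewrite ltn_pmod.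
rewrite (eq_bigr (fun a : 'I_m => ((maxn (i %/ m) (j %/ m) <= a)%N)%:R * gp m p a)); last by move=> a _; rewrite geq_max.
rewrite [X in _ = _ * X](eq_bigr (fun b : 'I_m => ((maxn (i %% m) (j %% m) <= b)%N)%:R * gp m q b)); last by move=> b _; rewrite geq_max.
by rewrite !onedim // gtn_max ?dm ?mm.
Qed.

Lemma sum_ind m (f : nat -> algC) (c : nat) :
  \sum_(a < m) f a * (((a : nat) == c)%N)%:R = ((c < m)%N)%:R * f c.
Proof.
elim: m => [|m IH]; first by rewrite big_ord0 mul0r.
rewrite big_ord_recr /= IH ltnS.
have [lt|gt|->] := ltngtP c m; rewrite ?eqxx ?mulr0 ?addr0 //.
by rewrite mul0r add0r mulr1 mul1r.
Qed.

Definition vi (k r : nat) : algC := ((k == r)%N)%:R - ((k == r.+1)%N)%:R.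

Lemma onedim_inv m r s : (r < m)%N -> (s < m)%N ->
  \sum_(a < m) ((a <= r)%N)%:R * vi a s = ((s == r)%N)%:R.
Proof.
move=> rm sm.
under eq_bigr => a _ do rewrite /vi mulrBr.
rewrite sumrB (sum_ind m (fun a => ((a <= r)%N)%:R) s) (sum_ind m (fun a => ((a <= r)%N)%:R) s.+1) sm mul1r.
have [lt|gt|eq] := ltngtP s r.
- by rewrite (leq_ltn_trans lt rm) mul1r subrr.
- by rewrite mulr0 subr0.
- by rewrite mulr0 subr0.
Qed.

Definition Winv p q m : 'M[algC]_(size (Spq p q m)) :=
  \matrix_(i, s) (vi (i %/ m) (s %/ m) * vi (i %% m) (s %% m)).

Lemma divmod_eq m (r s : nat) : ((s %/ m == r %/ m) && (s %% m == r %% m))%N = (s == r).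
Proof.
apply/idP/idP => [/andP[/eqP e1 /eqP e2]|/eqP -> ]; last by rewrite !eqxx.
by rewrite (divn_eq s m) (divn_eq r m) e1 e2.
Qed.

Lemma Wm_unit p q m : (0 < m)%N -> Wm p q m \in unitmx.
Proof.
move=> m0; suff H : Wm p q m *m Winv p q m = 1%:M by case: (mulmx1_unit H).
apply/matrixP => r s; rewrite !mxE.
have lt : forall k : 'I_(size (Spq p q m)), (k < m * m)%N.
  by move=> k; rewrite -(size_Spq p q m).
have dm : forall k : 'I_(size (Spq p q m)), (k %/ m < m)%N by move=> k; rewrite ltn_divLR.
have mm : forall k : 'I_(size (Spq p q m)), (k %% m < m)%N by move=> k; rewrite ltn_pmod.
pose F a b := (((a <= r %/ m)%N)%:R * vi a (s %/ m)) * (((b <= r %% m)%N)%:R * vi b (s %% m)).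
rewrite (eq_bigr (fun i : 'I_(size (Spq p q m)) => F (i %/ m)%N (i %% m)%N)); last first.
  move=> i _; rewrite !mxE /F natb_mul; ring.
rewrite (@sum_divmod _ 0 +%R m _ F m0 (size_Spq p q m)) /F -big_distrlr /=.
rewrite !onedim_inv // -natb_mul.
by rewrite divmod_eq eq_sym.
Qed.

Lemma lcm_herm (s : seq nat) : lcm_mx s \is hermsymmx.
Proof.
apply/is_hermitianmxP; rewrite expr0 scale1r.
by apply/matrixP => i j; rewrite !mxE lcmnC conjC_nat.
Qed.

Lemma gp_val m p a : (a < m)%N ->
  gp m p a = if (a.+1 < m)%N then p%:R ^+ a * (1 - p%:R) else p%:R ^+ a.
Proof.
move=> am; rewrite /gp /hp am mul1r; case: ifP => _; last by rewrite mul0r subr0.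
by rewrite mul1r exprS mulrBr mulr1 mulrC.
Qed.

Lemma gv_real p q m i : gv p q m 0 i \is Num.real.
Proof. by rewrite mxE /gp /hp rpredM ?rpredB ?rpredM ?rpredX ?rpred_nat. Qed.

Lemma count_sum n (f : 'I_n -> bool) : count f (enum 'I_n) = (\sum_(r < n) (f r : nat))%N.
Proof.
rewrite -cnt -sum1_card big_mkcond; apply: eq_bigr => i _; rewrite inE; by case: (f i).
Qed.

Lemma gp_sign m p a : (1 < p)%N -> (a < m)%N ->
  (if (a.+1 < m)%N then gp m p a < 0 else 0 < gp m p a).
Proof.
move=> p1 am; rewrite gp_val //.
have P0 : 0 < (p%:R : algC) ^+ a by rewrite exprn_gt0 // ltr0n (ltn_trans _ p1).
case: (a.+1 < m)%N => //.
by rewrite (pmulr_rlt0 _ P0) subr_lt0 ltr1n.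
Qed.

Lemma gprod_sign m p q a b : (1 < p)%N -> (1 < q)%N -> (a < m)%N -> (b < m)%N ->
  (gp m p a * gp m q b < 0) = ((a.+1 < m)%N (+) (b.+1 < m)%N) /\
  (0 < gp m p a * gp m q b) = ~~ ((a.+1 < m)%N (+) (b.+1 < m)%N).
Proof.
move=> p1 q1 am bm.
have := gp_sign p1 am; have := gp_sign q1 bm.
case: ifP => _ Hb; case: ifP => _ Ha /=.
- rewrite (nmulr_rgt0 _ Ha) Hb; split => //.
  by apply: lt_gtF; rewrite nmulr_rgt0.
- rewrite (pmulr_rlt0 _ Ha) Hb; split => //.
  by apply: lt_gtF; rewrite pmulr_rlt0.
- rewrite (nmulr_rlt0 _ Ha) Hb; split => //.
  by apply: lt_gtF; rewrite nmulr_rlt0.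
- rewrite (pmulr_rgt0 _ Ha) Hb; split => //.
  by apply: lt_gtF; rewrite pmulr_rgt0.
Qed.

Lemma sum_xor k (f : bool -> bool -> bool) :
  (\sum_(a < k.+1) \sum_(b < k.+1) (f (a < k)%N (b < k)%N : nat))%N =
  (k * (k * f true true + f true false) + (k * f false true + f false false))%N.
Proof.
have inner : forall x, (\sum_(b < k.+1) (f x (b < k)%N : nat))%N = (k * f x true + f x false)%N.
  move=> x; rewrite big_ord_recr /= ltnn.
  rewrite (eq_bigr (fun _ => f x true : nat)); last by move=> b _; rewrite /= ltn_ord.
  by rewrite sum_nat_const card_ord.
rewrite big_ord_recr /= ltnn inner.
rewrite (eq_bigr (fun _ => (k * f true true + f true false)%N)); last first.
  by move=> a _; rewrite /= ltn_ord inner.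
by rewrite sum_nat_const card_ord.
Qed.
From mathcomp Require Import zify.

Lemma sum_neg m : (1 < m)%N ->
  (\sum_(a < m) \sum_(b < m) (((a.+1 < m)%N (+) (b.+1 < m)%N) : nat))%N = (2 * m - 2)%N.
Proof.
case: m => // k _.
under eq_bigr => a _ do under eq_bigr => b _ do rewrite !ltnS.
rewrite (sum_xor k addb) /=; lia.
Qed.

Lemma sum_pos m : (1 < m)%N ->
  (\sum_(a < m) \sum_(b < m) ((~~ ((a.+1 < m)%N (+) (b.+1 < m)%N)) : nat))%N = ((m - 1) ^ 2 + 1)%N.
Proof.
case: m => // k _.
under eq_bigr => a _ do under eq_bigr => b _ do rewrite !ltnS.
rewrite (sum_xor k (fun x y => ~~ (x (+) y))) /=; rewrite subn1 /=; lia.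
Qed.

Lemma gv_counts p q m : prime p -> prime q -> (1 < m)%N ->
  count (fun i => gv p q m 0 i < 0) (enum 'I_(size (Spq p q m))) = (2 * m - 2)%N /\
  count (fun i => 0 < gv p q m 0 i) (enum 'I_(size (Spq p q m))) = ((m - 1) ^ 2 + 1)%N.
Proof.
move=> pp pq m1; have m0 : (0 < m)%N by apply: ltnW.
have p1 := prime_gt1 pp; have q1 := prime_gt1 pq.
have lt : forall k : 'I_(size (Spq p q m)), (k < m * m)%N.
  by move=> k; rewrite -(size_Spq p q m).
have dm : forall k : 'I_(size (Spq p q m)), (k %/ m < m)%N by move=> k; rewrite ltn_divLR.
have mm : forall k : 'I_(size (Spq p q m)), (k %% m < m)%N by move=> k; rewrite ltn_pmod.
split; rewrite count_sum.
  pose F a b := (((a.+1 < m)%N (+) (b.+1 < m)%N) : nat).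
  rewrite (eq_bigr (fun r : 'I_(size (Spq p q m)) => F (r %/ m)%N (r %% m)%N)); last first.
    by move=> r _; rewrite mxE (gprod_sign p1 q1 (dm r) (mm r)).1.
  by rewrite (@sum_divmod _ 0%N addn m _ F m0 (size_Spq p q m)) sum_neg.
pose F a b := ((~~ ((a.+1 < m)%N (+) (b.+1 < m)%N)) : nat).
rewrite (eq_bigr (fun r : 'I_(size (Spq p q m)) => F (r %/ m)%N (r %% m)%N)); last first.
  by move=> r _; rewrite mxE (gprod_sign p1 q1 (dm r) (mm r)).2.
by rewrite (@sum_divmod _ 0%N addn m _ F m0 (size_Spq p q m)) sum_pos.
Qed.

Local Close Scope ring_scope.

Theorem mainTheorem15 (p q m : nat) :
  prime p -> prime q -> p != q -> (1 < m)%N ->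
  [/\ uniq (Spq p q m), size (Spq p q m) = (m * m)%N,
      i_minus (lcm_mx (Spq p q m)) = (2 * m - 2)%N
    & i_plus (lcm_mx (Spq p q m)) = ((m - 1) ^ 2 + 1)%N].
Proof.
move=> pp pq npq m1; have m0 : (0 < m)%N by apply: ltnW.
have [h1 h2] := inertia (lcm_herm _) (Wm_unit p q m0) (@gv_real p q m) (lcm_decomp pp pq npq m0).
have [c1 c2] := gv_counts pp pq m1.
split; [exact: uniq_Spq | exact: size_Spq | by rewrite h1 c1 | by rewrite h2 c2].
Qed.
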